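(* The abelianization of an SB-generated group is finitely generated.
   Context: A subset of a group $G$ is strongly bounded if it has finite diameter in every left-invariant metric on $G$; a group is SB-generated if it is generated by a strongly bounded subset. *)

(* Defs.v *)
From Stdlib Require Import Reals List.
Open Scope R_scope.

Record group := Group {
  carrier :> Type;
  gmul : carrier -> carrier -> carrier;
  ginv : carrier -> carrier;
  gone : carrier;
  gmulA : forall x y z, gmul x (gmul y z) = gmul (gmul x y) z;
  gmul1 : forall x, gmul gone x = x;
  gmulV : forall x, gmul (ginv x) x = gone
}.

Arguments gmul {g}.
Arguments ginv {g}.
Arguments gone {g}.

Inductive gen (G : group) (A : G -> Prop) : G -> Prop :=
| gen_base : forall x, A x -> gen G A x
| gen_one : gen G A gone
| gen_mul : forall x y, gen G A x -> gen G A y -> gen G A (gmul x y)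
| gen_inv : forall x, gen G A x -> gen G A (ginv x).

Definition left_invariant_metric (G : group) (d : G -> G -> R) : Prop :=
  (forall x y, 0 <= d x y) /\
  (forall x y, d x y = 0 <-> x = y) /\
  (forall x y, d x y = d y x) /\
  (forall x y z, d x z <= d x y + d y z) /\
  (forall g x y, d (gmul g x) (gmul g y) = d x y).

Definition strongly_bounded (G : group) (A : G -> Prop) : Prop :=
  forall d : G -> G -> R, left_invariant_metric G d ->
    exists M : R, forall x y, A x -> A y -> d x y <= M.

Definition SB_generated (G : group) : Prop :=
  exists A : G -> Prop, strongly_bounded G A /\ forall g : G, gen G A g.

Definition commutator {G : group} (x y : G) : G :=
  gmul (gmul (ginv x) (ginv y)) (gmul x y).

Definition commutator_subgroup (G : group) : G -> Prop :=
  gen G (fun z => exists x y : G, z = commutator x y).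

(* G/[G,G] is finitely generated: finitely many cosets s_i [G,G] generate the
   quotient, i.e. every g is congruent mod [G,G] to an element of <s>. *)
Definition abelianization_finitely_generated (G : group) : Prop :=
  exists s : list G, forall g : G,
    exists h : G, gen G (fun x => In x s) h /\
                  commutator_subgroup G (gmul (ginv h) g).

(* Main.v *)
Require Import Defs.
From Stdlib Require Import Reals List ZArith Znumtheory Lia Lra ClassicalEpsilon Classical FunctionalExtensionality PropExtensionality ProofIrrelevance Factorial.

Definition pincl {X : Type} (A B : X -> Prop) := forall x, A x -> B x.
Definition bigU {X : Type} (M0 : X -> Prop) (ch : (X -> Prop) -> Prop) : X -> Prop :=
  fun x => M0 x \/ exists K, ch K /\ K x.
Definition is_chain {X : Type} (ch : (X -> Prop) -> Prop) :=
  forall A B, ch A -> ch B -> pincl A B \/ pincl B A.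

Lemma pred_ext {X : Type} (A B : X -> Prop) : pincl A B -> pincl B A -> A = B.
Proof.
  intros h1 h2. apply functional_extensionality; intro x.
  apply propositional_extensionality; split; auto.
Qed.

Section Tower.
Variable X : Type.
Variable nx : (X -> Prop) -> (X -> Prop).
Variable M0 : X -> Prop.
Hypothesis nx_incl : forall M, pincl M (nx M).

Inductive tower : (X -> Prop) -> Prop :=
| tw_next : forall M, tower M -> tower (nx M)
| tw_union : forall ch, (forall K, ch K -> tower K) -> tower (bigU M0 ch).

Lemma tower_M0 : forall M, tower M -> pincl M0 M.
Proof.
  intros M TM; induction TM as [M TM IH | ch Hch IH].
  - intros x hx; apply nx_incl; auto.
  - intros x hx; left; auto.
Qed.

Definition extreme M := forall N, tower N -> pincl N M -> N = M \/ pincl (nx N) M.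

Lemma L1 : forall M, tower M -> extreme M -> forall N, tower N -> pincl N M \/ pincl (nx M) N.
Proof.
  intros M TM EM N TN; induction TN as [N TN IH | ch Hch IH].
  - destruct IH as [h|h].
    + destruct (EM N TN h) as [e|h2].
      * subst. right. intros x hx; exact hx.
      * left; exact h2.
    + right. intros x hx; apply nx_incl; auto.
  - destruct (classic (exists K, ch K /\ pincl (nx M) K)) as [[K [hK hi]]|hn].
    + right. intros x hx. right. exists K. split; auto.
    + left. intros x [h0|[K [hK hx]]].
      * apply (tower_M0 M TM); auto.
      * destruct (IH K hK) as [h|h]; [exact (h x hx)|].
        exfalso; apply hn; eauto.
Qed.

Lemma L2 : forall M, tower M -> extreme M.
Proof.
  intros M TM; induction TM as [M TM IH | ch Hch IH].
  - intros N TN hN. destruct (L1 M TM IH N TN) as [h|h].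
    + destruct (IH N TN h) as [e|h2].
      * subst. right. intros x hx; exact hx.
      * right. intros x hx; apply nx_incl; auto.
    + left. apply pred_ext; auto.
  - intros N TN hN.
    destruct (classic (forall K, ch K -> pincl K N)) as [hall|hn].
    + left. apply pred_ext; [exact hN|].
      intros x [h0|[K [hK hx]]].
      * apply (tower_M0 N TN); auto.
      * exact (hall K hK x hx).
    + apply not_all_ex_not in hn. destruct hn as [K hK].
      apply imply_to_and in hK. destruct hK as [hK hK'].
      destruct (L1 K (Hch K hK) (IH K hK) N TN) as [h|h].
      * destruct (IH K hK N TN h) as [e|h2].
        -- subst. exfalso; apply hK'; intros x hx; exact hx.
        -- right. intros x hx. right. exists K; auto.
      * exfalso. apply hK'. intros x hx. apply h, nx_incl; auto.
Qed.

Lemma tower_chain : is_chain tower.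
Proof.
  intros A B TA TB. destruct (L1 A TA (L2 A TA) B TB) as [h|h].
  - right; auto.
  - left. intros x hx; apply h, nx_incl; auto.
Qed.
End Tower.

Lemma zorn {X : Type} (P : (X -> Prop) -> Prop) (M0 : X -> Prop) :
  P M0 ->
  (forall ch, is_chain ch -> (forall K, ch K -> P K /\ pincl M0 K) -> P (bigU M0 ch)) ->
  exists M, P M /\ pincl M0 M /\ forall K, P K -> pincl M K -> pincl K M.
Proof.
  intros HP0 Hch. apply NNPP; intro Hno.
  assert (Hex : forall M, P M /\ pincl M0 M -> exists K, P K /\ pincl M K /\ ~ pincl K M).
  { intros M [hM hM0]. apply NNPP; intro hn. apply Hno. exists M. split; [|split]; auto.
    intros K hK hMK. apply NNPP; intro hKM. apply hn. exists K; auto. }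
  set (nx := fun M => match excluded_middle_informative (P M /\ pincl M0 M) with
                      | left h => proj1_sig (constructive_indefinite_description _ (Hex M h))
                      | right _ => M end).
  assert (nx_incl : forall M, pincl M (nx M)).
  { intros M. unfold nx. destruct (excluded_middle_informative _) as [h|h].
    - destruct (constructive_indefinite_description _ _) as [K HK]; simpl; apply HK.
    - intros x hx; exact hx. }
  assert (nx_P : forall M, P M -> pincl M0 M -> P (nx M) /\ ~ pincl (nx M) M).
  { intros M h1 h2. unfold nx. destruct (excluded_middle_informative _) as [h|h].
    - destruct (constructive_indefinite_description _ _) as [K HK]; simpl; split; apply HK.
    - exfalso; auto. }
  assert (TP : forall M, tower X nx M0 M -> P M /\ pincl M0 M).
  { intros M TM; induction TM as [M TM IH | ch Hc IH].
    - destruct IH as [h1 h2]. split.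
      + apply nx_P; auto.
      + intros x hx; apply nx_incl; auto.
    - split.
      + apply Hch.
        * intros A B hA hB. apply (tower_chain X nx M0 nx_incl); auto.
        * exact IH.
      + intros x hx; left; auto. }
  set (Ms := bigU M0 (tower X nx M0)).
  assert (TMs : tower X nx M0 Ms) by (apply tw_union; auto).
  destruct (TP Ms TMs) as [h1 h2].
  destruct (nx_P Ms h1 h2) as [_ hn]. apply hn.
  intros x hx. right. exists (nx Ms). split; auto. apply tw_next; auto.
Qed.

Record abgroup := AbGroup {
  acar :> Type;
  add : acar -> acar -> acar;
  opp : acar -> acar;
  zero : acar;
  addA : forall x y z, add x (add y z) = add (add x y) z;
  addC : forall x y, add x y = add y x;
  add0 : forall x, add zero x = x;
  addN : forall x, add (opp x) x = zero
}.
Arguments add {a}. Arguments opp {a}. Arguments zero {a}.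
Arguments addA {a}. Arguments addC {a}. Arguments add0 {a}. Arguments addN {a}.

Section AbTh.
Variable H : abgroup.
Implicit Types x y z : H.

Lemma addr0 x : add x zero = x.
Proof. rewrite addC; apply add0. Qed.
Lemma addNr x : add x (opp x) = zero.
Proof. rewrite addC; apply addN. Qed.
Lemma add_cancel_l x y z : add x y = add x z -> y = z.
Proof.
  intro h. rewrite <- (add0 y), <- (add0 z), <- (addN x), <- !addA, h; reflexivity.
Qed.
Lemma opp_add x y : opp (add x y) = add (opp x) (opp y).
Proof.
  apply (add_cancel_l (add x y)). rewrite addNr.
  rewrite (addC (opp x)), addA, <- (addA x y), addNr, addr0, addNr; reflexivity.
Qed.
Lemma swap4 (a b c d : H) : add (add a b) (add c d) = add (add a c) (add b d).
Proof.
  rewrite <- !addA. f_equal. rewrite !addA. f_equal. apply addC.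
Qed.
Lemma opp_opp x : opp (opp x) = x.
Proof. apply (add_cancel_l (opp x)). rewrite addNr, addN; reflexivity. Qed.
Lemma opp0 : opp (@zero H) = zero.
Proof. rewrite <- (addr0 (opp zero)). apply addN. Qed.

Fixpoint nmul (n : nat) x : H := match n with O => zero | S n => add x (nmul n x) end.
Lemma nmul_add m n x : nmul (m + n) x = add (nmul m x) (nmul n x).
Proof. induction m; simpl. - rewrite add0; auto. - rewrite IHm, addA; auto. Qed.

Definition zmul (a : Z) x : H := add (nmul (Z.to_nat a) x) (opp (nmul (Z.to_nat (- a)) x)).

Lemma zmul_add a b x : zmul (a + b) x = add (zmul a x) (zmul b x).
Proof.
  unfold zmul.
  set (t := (Z.to_nat a + Z.to_nat b - Z.to_nat (a+b))%nat).
  assert (e1 : (Z.to_nat a + Z.to_nat b = Z.to_nat (a+b) + t)%nat) by (unfold t; lia).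
  assert (e2 : (Z.to_nat (-a) + Z.to_nat (-b) = Z.to_nat (-(a+b)) + t)%nat) by (unfold t; lia).
  assert (E : add (add (nmul (Z.to_nat a) x) (opp (nmul (Z.to_nat (- a)) x)))
             (add (nmul (Z.to_nat b) x) (opp (nmul (Z.to_nat (- b)) x)))
            = add (nmul (Z.to_nat a + Z.to_nat b) x) (opp (nmul (Z.to_nat (-a) + Z.to_nat (-b)) x))).
  { rewrite !nmul_add, opp_add. apply swap4. }
  rewrite E, e1, e2, !nmul_add, opp_add, swap4, addNr, addr0. reflexivity.
Qed.

Lemma zmul0 x : zmul 0 x = zero.
Proof. unfold zmul; simpl. rewrite opp0, add0; auto. Qed.
Lemma zmul1 x : zmul 1 x = x.
Proof. unfold zmul; simpl. rewrite opp0, !addr0; auto. Qed.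
Lemma zmul_opp a x : zmul (- a) x = opp (zmul a x).
Proof.
  apply (add_cancel_l (zmul a x)). rewrite <- zmul_add, addNr.
  replace (a + - a)%Z with 0%Z by lia. apply zmul0.
Qed.
Lemma zmulm1 x : zmul (-1) x = opp x.
Proof. change (-1)%Z with (- (1))%Z. rewrite zmul_opp, zmul1; auto. Qed.
Lemma zmul_succ a x : zmul (Z.succ a) x = add (zmul a x) x.
Proof. rewrite <- Z.add_1_r, zmul_add, zmul1; auto. Qed.
Lemma zmul_pred a x : zmul (Z.pred a) x = add (zmul a x) (opp x).
Proof. rewrite <- Z.sub_1_r, <- Z.add_opp_r, zmul_add. change (- (1))%Z with (-1)%Z. rewrite zmulm1; auto. Qed.

Lemma zmul_zero a : zmul a (@zero H) = zero.
Proof.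
  induction a using Z.peano_ind.
  - apply zmul0.
  - rewrite zmul_succ, IHa, add0; auto.
  - rewrite zmul_pred, IHa, add0, opp0; auto.
Qed.

Lemma zmul_addr a x y : zmul a (add x y) = add (zmul a x) (zmul a y).
Proof.
  induction a using Z.peano_ind.
  - rewrite !zmul0, add0; auto.
  - rewrite !zmul_succ, IHa. apply swap4.
  - rewrite !zmul_pred, IHa, opp_add. apply swap4.
Qed.

Lemma zmul_oppr a x : zmul a (opp x) = opp (zmul a x).
Proof.
  apply (add_cancel_l (zmul a x)). rewrite <- zmul_addr, !addNr, zmul_zero; auto.
Qed.

Lemma zmul_mul a b x : zmul (a * b) x = zmul a (zmul b x).
Proof.
  induction a using Z.peano_ind.
  - rewrite !zmul0; auto.
  - rewrite Z.mul_succ_l, zmul_succ, zmul_add, IHa; auto.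
  - rewrite Z.mul_pred_l, zmul_pred, <- Z.add_opp_r, zmul_add, IHa, zmul_opp; auto.
Qed.

Definition subgroup (S : H -> Prop) := S zero /\ (forall x y, S x -> S y -> S (add x y)) /\ (forall x, S x -> S (opp x)).

Lemma sub_zmul S : subgroup S -> forall a x, S x -> S (zmul a x).
Proof.
  intros [h0 [hA hN]] a x hx. induction a using Z.peano_ind.
  - rewrite zmul0; auto.
  - rewrite zmul_succ; auto.
  - rewrite zmul_pred; auto.
Qed.

Definition sumg (K L : H -> Prop) : H -> Prop := fun z => exists k l, K k /\ L l /\ z = add k l.
Definition cyc x : H -> Prop := fun z => exists a, z = zmul a x.
Definition zsub : H -> Prop := fun z => z = zero.

Lemma sumg_sub K L : subgroup K -> subgroup L -> subgroup (sumg K L).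
Proof.
  intros [k0 [kA kN]] [l0 [lA lN]]. split; [|split].
  - exists zero, zero. rewrite add0; auto.
  - intros x y [k [l [hk [hl ->]]]] [k' [l' [hk' [hl' ->]]]].
    exists (add k k'), (add l l'). split; [|split]; auto. apply swap4.
  - intros x [k [l [hk [hl ->]]]]. exists (opp k), (opp l). rewrite opp_add; auto.
Qed.

Lemma cyc_sub x : subgroup (cyc x).
Proof.
  split; [|split].
  - exists 0%Z. rewrite zmul0; auto.
  - intros u v [a ->] [b ->]. exists (a + b)%Z. rewrite zmul_add; auto.
  - intros u [a ->]. exists (- a)%Z. rewrite zmul_opp; auto.
Qed.

Lemma zsub_sub : subgroup zsub.
Proof.
  unfold zsub; split; [|split]; auto.
  - intros x y -> ->; apply add0.
  - intros x ->; apply opp0.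
Qed.

Lemma sumg_l K L x : subgroup L -> K x -> sumg K L x.
Proof. intros [l0 _] h. exists x, zero. rewrite addr0; auto. Qed.
Lemma sumg_r K L x : subgroup K -> L x -> sumg K L x.
Proof. intros [k0 _] h. exists zero, x. rewrite add0; auto. Qed.
Lemma sumg_mono K K' L L' x : pincl K K' -> pincl L L' -> sumg K L x -> sumg K' L' x.
Proof. intros h1 h2 [k [l [hk [hl ->]]]]. exists k, l; auto. Qed.
Lemma cyc_self x : cyc x x.
Proof. exists 1%Z; rewrite zmul1; auto. Qed.

Fixpoint spanl (l : list H) : H -> Prop :=
  match l with nil => zsub | a :: l => sumg (cyc a) (spanl l) end.
Lemma spanl_sub l : subgroup (spanl l).
Proof. induction l; simpl. apply zsub_sub. apply sumg_sub; auto. apply cyc_sub. Qed.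

Lemma spanl_app l1 l2 x y : spanl l1 x -> spanl l2 y -> spanl (l1 ++ l2) (add x y).
Proof.
  revert x; induction l1 as [|a l1 IH]; simpl; intros x hx hy.
  - unfold zsub in hx; subst; rewrite add0; auto.
  - destruct hx as [k [l [hk [hl ->]]]]. exists k, (add l y). split; [|split]; auto.
    rewrite addA; auto.
Qed.

Lemma sub_sub S x y : subgroup S -> S (add x y) -> S y -> S x.
Proof.
  intros [h0 [hA hN]] h1 h2. replace x with (add (add x y) (opp y)).
  - apply hA; auto.
  - rewrite <- addA, addNr, addr0; auto.
Qed.

End AbTh.

Section Gen.
Variable H : abgroup.
Implicit Types x y z : H.

Lemma bigU_sub (F : H -> Prop) ch : subgroup H F -> is_chain ch ->
  (forall K, ch K -> subgroup H K /\ pincl F K) -> subgroup H (bigU F ch).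
Proof.
  intros [f0 [fA fN]] hc hK. split; [|split].
  - left; auto.
  - intros x y [hx|[K1 [h1 hx]]] [hy|[K2 [h2 hy]]].
    + left; auto.
    + right. exists K2. destruct (hK K2 h2) as [[_ [kA _]] kF]. split; auto.
    + right. exists K1. destruct (hK K1 h1) as [[_ [kA _]] kF]. split; auto.
    + right. destruct (hc K1 K2 h1 h2) as [i|i].
      * exists K2. destruct (hK K2 h2) as [[_ [kA _]] kF]. split; auto.
      * exists K1. destruct (hK K1 h1) as [[_ [kA _]] kF]. split; auto.
  - intros x [hx|[K [h hx]]].
    + left; auto.
    + right; exists K. destruct (hK K h) as [[_ [_ kN]] _]. split; auto.
Qed.

Fixpoint Wf (w : nat -> H) (n : nat) : H -> Prop :=
  match n with O => zsub H | S n => sumg H (cyc H (w n)) (Wf w n) end.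

Lemma Wf_sub w n : subgroup H (Wf w n).
Proof. induction n; simpl. apply zsub_sub. apply sumg_sub; auto. apply cyc_sub. Qed.
Lemma Wf_S w n x : Wf w n x -> Wf w (S n) x.
Proof. intro h. simpl. apply sumg_r; auto. apply cyc_sub. Qed.
Lemma Wf_mono w m n x : (m <= n)%nat -> Wf w m x -> Wf w n x.
Proof. induction 1; auto. intro h; apply Wf_S; auto. Qed.
Lemma Wf_w w n : Wf w (S n) (w n).
Proof. simpl. apply sumg_l. apply Wf_sub. apply cyc_self. Qed.

Definition chainP (S F : H -> Prop) (Sn : nat -> H -> Prop) :=
  (forall n, subgroup H (Sn n)) /\ (forall n x, F x -> Sn n x) /\ (forall n x, Sn n x -> S x) /\
  (forall n x, Sn n x -> Sn (Datatypes.S n) x) /\ (forall x, S x -> exists n, Sn n x) /\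
  (forall n, exists x, S x /\ ~ Sn n x).

Lemma generic (S F : H -> Prop) (w : nat -> H) (c : nat -> Z) :
  subgroup H S -> subgroup H F -> pincl F S -> (forall n, S (w n)) ->
  (forall n, ~ sumg H F (Wf w n) (zmul H (c n) (w n))) ->
  (forall n, exists q, c (Datatypes.S n) = (q * c n)%Z) ->
  (forall K, subgroup H K -> pincl F K -> pincl K S -> forall x, S x -> ~ K x -> forall n a,
     sumg H K (Wf w (Datatypes.S n)) (zmul H a x) -> ~ sumg H K (Wf w n) (zmul H a x) ->
     exists m, sumg H K (Wf w m) (zmul H (c m) x)) ->
  exists Sn, chainP S F Sn.
Proof.
  intros hS hF hFS hw h1 hmono hcov.
  set (P := fun K => subgroup H K /\ pincl F K /\ pincl K S /\
                     forall n, ~ sumg H K (Wf w n) (zmul H (c n) (w n))).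
  destruct (zorn P F) as [K [[hK [hFK [hKS hKn]]] [_ hmax]]].
  - split; [|split; [|split]]; auto. intros x h; auto.
  - intros ch hc hch. split; [|split; [|split]].
    + apply bigU_sub; auto. intros K hK; destruct (hch K hK) as [[h _] h']; auto.
    + intros x hx; left; auto.
    + intros x [hx|[K [hK hx]]]; auto. destruct (hch K hK) as [[_ [_ [h _]]] _]; auto.
    + intros n [k [l [[hk|[K [hKc hk]]] [hl he]]]].
      * apply (h1 n). exists k, l; auto.
      * destruct (hch K hKc) as [[_ [_ [_ h]]] _]. apply (h n). exists k, l; auto.
  - exists (fun n x => S x /\ sumg H K (Wf w n) (zmul H (c n) x)).
    assert (hKW : forall n, subgroup H (sumg H K (Wf w n))) by (intro; apply sumg_sub; auto; apply Wf_sub).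
    split; [|split; [|split; [|split; [|split]]]].
    + intro n. destruct (hKW n) as [s0 [sA sN]]. destruct hS as [t0 [tA tN]]. split; [|split].
      * split; auto. rewrite zmul_zero; auto.
      * intros x y [hx1 hx2] [hy1 hy2]. split; auto. rewrite zmul_addr; auto.
      * intros x [hx1 hx2]. split; auto. rewrite zmul_oppr; auto.
    + intros n x hx. split; auto. apply sumg_l. apply Wf_sub. apply hFK. apply sub_zmul; auto.
    + intros n x [h _]; auto.
    + intros n x [hx1 hx2]. split; auto. destruct (hmono n) as [q ->].
      rewrite zmul_mul. apply sub_zmul; auto.
      revert hx2. apply sumg_mono. intros u hu; auto. intros u hu; apply Wf_S; auto.
    + intros x hx. destruct (classic (K x)) as [hkx|hkx].
      * exists 0%nat. split; auto. apply sumg_l. apply Wf_sub. apply sub_zmul; auto.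
      * set (K' := sumg H K (cyc H x)).
        assert (hK' : subgroup H K') by (apply sumg_sub; auto; apply cyc_sub).
        assert (nP : ~ P K').
        { intro hp. apply hkx. apply (hmax K' hp).
          - intros u hu; apply sumg_l; auto. apply cyc_sub.
          - apply sumg_r; auto. apply cyc_self. }
        assert (ex : exists n, sumg H K' (Wf w n) (zmul H (c n) (w n))).
        { apply NNPP; intro hn. apply nP. split; [exact hK'|split; [|split]].
          - intros u hu; apply sumg_l; auto. apply cyc_sub.
          - intros u [k [l [hk [[a ->] ->]]]]. destruct hS as [s0 [sA sN]].
            apply sA; auto. apply sub_zmul; auto. split; auto.
          - intros n hn'. apply hn; eauto. }
        destruct ex as [n [k' [l [[k [xa [hk [[a ->] ->]]]] [hl he]]]]].
        destruct (hcov K hK hFK hKS x hx hkx n a) as [m hm].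
        --
           assert (e : zmul H a x = add (zmul H (c n) (w n)) (opp (add k l))).
           { rewrite he. rewrite (addC k), <- (addA (zmul H a x)), <- addA, addNr, addr0. reflexivity. }
           rewrite e. destruct (sumg_sub H K (Wf w (Datatypes.S n)) hK (Wf_sub w (Datatypes.S n))) as [_ [qA qN]].
           apply qA.
           ++ apply sumg_r; auto. apply sub_zmul. apply Wf_sub. apply Wf_w.
           ++ apply qN. exists k, l. split; auto. split; auto. apply Wf_S; auto.
        -- intros [k2 [l2 [hk2 [hl2 e2]]]]. apply (hKn n).
           rewrite he, e2. exists (add k k2), (add l2 l). split; [|split].
           ++ destruct hK as [_ [kA _]]; auto.
           ++ destruct (Wf_sub w n) as [_ [wA _]]; auto.
           ++ rewrite (addA k k2 l2). rewrite <- addA. reflexivity.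
        -- exists m. split; auto.
    + intro n. exists (w n). split; auto. intros [_ h]. apply (hKn n h).
Qed.
End Gen.

Lemma prime_div : forall n : Z, (1 < n)%Z -> exists p, prime p /\ (p | n)%Z.
Proof.
  intro n. remember (Z.to_nat n) as k. revert n Heqk.
  induction k as [k IH] using lt_wf_ind. intros n Hk hn.
  destruct (prime_dec n) as [hp|hp].
  - exists n; split; auto. apply Z.divide_refl.
  - destruct (not_prime_divide n hn hp) as [d [hd hdn]].
    destruct (IH (Z.to_nat d)) with (n := d) as [p [pp pd]]; try lia; auto.
    exists p; split; auto. eapply Z.divide_trans; eauto.
Qed.

Lemma div_fact : forall N k, (1 <= k <= N)%nat -> Nat.divide k (fact N).
Proof.
  induction N; intros k hk; [lia|].
  destruct (Nat.eq_dec k (S N)) as [->|ne].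
  - exists (fact N). simpl fact. lia.
  - destruct (IHN k) as [q hq]; [lia|]. exists (S N * q)%nat. simpl fact. rewrite hq. lia.
Qed.

Section Main.
Variable H : abgroup.
Implicit Types x y z : H.

Definition fgmod (S F : H -> Prop) :=
  exists l, (forall a, In a l -> S a) /\ forall x, S x -> sumg H F (spanl H l) x.

Lemma chainP_weaken S F L Sn : pincl F L -> chainP H S L Sn -> chainP H S F Sn.
Proof.
  intros hFL [h1 [h2 h3]]. split; [auto|split; [|auto]]. intros n x hx; apply h2, hFL; auto.
Qed.

Lemma fg_trans S L F : subgroup H S -> subgroup H L -> subgroup H F -> pincl F L -> pincl L S ->
  fgmod S L -> fgmod L F -> fgmod S F.
Proof.
  intros hS hL hF hFL hLS [l1 [i1 h1]] [l2 [i2 h2]]. exists (l1 ++ l2). split.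
  - intros a ha. apply in_app_or in ha. destruct ha; auto.
  - intros x hx. destruct (h1 x hx) as [y [s1 [hy [hs1 ->]]]].
    destruct (h2 y hy) as [f [s2 [hf [hs2 ->]]]].
    exists f, (add s2 s1). split; [auto|split].
    + rewrite (addC s2 s1). apply spanl_app; auto.
    + rewrite <- addA. auto.
Qed.

Lemma expp (S F : H -> Prop) (p : Z) : prime p -> subgroup H S -> subgroup H F -> pincl F S ->
  (forall x, S x -> F (zmul H p x)) -> ~ fgmod S F -> exists Sn, chainP H S F Sn.
Proof.
  intros pp hS hF hFS hp hnfg.
  assert (hg : forall l : list H, exists v, (forall a, In a l -> S a) -> S v /\ ~ sumg H F (spanl H l) v).
  { intro l. destruct (classic (forall a, In a l -> S a)) as [hl|hl].
    - apply NNPP; intro hn. apply hnfg. exists l. split; auto. intros x hx.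
      apply NNPP; intro hx2. apply hn. exists x; auto.
    - exists zero. intro; contradiction. }
  set (g := fun l => proj1_sig (constructive_indefinite_description _ (hg l))).
  assert (gspec : forall l, (forall a, In a l -> S a) -> S (g l) /\ ~ sumg H F (spanl H l) (g l)).
  { intro l. unfold g. destruct (constructive_indefinite_description _ _); simpl; auto. }
  set (ws := nat_rect (fun _ => list H) nil (fun n l => g l :: l)).
  set (w := fun n => g (ws n)).
  assert (wsS : forall n a, In a (ws n) -> S a).
  { induction n; simpl; intros a ha; [contradiction|]. destruct ha as [<-|ha]; auto.
    apply gspec. exact IHn. }
  assert (WE : forall n, Wf H w n = spanl H (ws n)).
  { induction n; simpl; auto. rewrite IHn. reflexivity. }
  apply (generic H S F w (fun _ => 1%Z)); auto.
  - intro n. apply gspec. apply wsS.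
  - intros n. rewrite zmul1, WE. apply gspec. apply wsS.
  - intros n. exists 1%Z. reflexivity.
  - intros K hK hFK hKS x hx hkx n a h1 h2. exists (Datatypes.S n). rewrite zmul1.
    assert (nd : ~ (p | a)%Z).
    { intros [q ->]. apply h2. apply sumg_l. apply Wf_sub. rewrite zmul_mul.
      apply sub_zmul; auto. }
    destruct (rel_prime_bezout _ _ (prime_rel_prime p pp a nd)) as [u v huv].
    rewrite <- (zmul1 H x), <- huv, zmul_add, !zmul_mul.
    destruct (sumg_sub H K (Wf H w (Datatypes.S n)) hK (Wf_sub H w _)) as [_ [qA _]].
    apply qA.
    + apply sumg_l. apply Wf_sub. apply sub_zmul; auto.
    + apply sub_zmul; auto. apply sumg_sub; auto. apply Wf_sub.
Qed.

Lemma bounded : forall M : nat, (1 <= M)%nat -> forall S F, subgroup H S -> subgroup H F -> pincl F S ->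
  (forall x, S x -> F (zmul H (Z.of_nat M) x)) -> ~ fgmod S F -> exists Sn, chainP H S F Sn.
Proof.
  intro M. induction M as [M IH] using lt_wf_ind. intros hM S F hS hF hFS hMS hnfg.
  destruct (Nat.eq_dec M 1) as [->|hM1].
  - exfalso. apply hnfg. exists nil. split; [intros a []|]. intros x hx.
    apply sumg_l. apply zsub_sub. specialize (hMS x hx). rewrite zmul1 in hMS; auto.
  - destruct (prime_div (Z.of_nat M)) as [p [pp [q hq]]]; [lia|].
    pose proof (prime_ge_2 p pp) as p2.
    assert (q1 : (1 <= q)%Z) by nia.
    assert (qM : (Z.to_nat q < M)%nat) by nia.
    set (L := fun y => exists s f, S s /\ F f /\ y = add (zmul H p s) f).
    assert (hL : subgroup H L).
    { destruct hS as [s0 [sA sN]]. destruct hF as [f0 [fA fN]]. split; [|split].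
      - exists zero, zero. rewrite zmul_zero, add0. auto.
      - intros x y [s [f [hs [hf ->]]]] [s' [f' [hs' [hf' ->]]]].
        exists (add s s'), (add f f'). split; [|split]; auto. rewrite zmul_addr. apply swap4.
      - intros x [s [f [hs [hf ->]]]]. exists (opp s), (opp f). rewrite zmul_oppr, opp_add. auto. }
    assert (hFL : pincl F L).
    { intros f hf. exists zero, f. destruct hS as [s0 _]. rewrite zmul_zero, add0; auto. }
    assert (hLS : pincl L S).
    { intros y [s [f [hs [hf ->]]]]. destruct hS as [s0 [sA sN]]. apply sA; auto. apply sub_zmul; auto. split; auto. }
    assert (hpL : forall x, S x -> L (zmul H p x)).
    { intros x hx. exists x, zero. destruct hF as [f0 _]. rewrite addr0; auto. }
    destruct (classic (fgmod L F)) as [hfg|hfg].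
    + destruct (expp S L p pp hS hL hLS hpL) as [Sn hSn].
      * intro h. apply hnfg. apply (fg_trans S L F); auto.
      * exists Sn. apply (chainP_weaken _ _ L); auto.
    + destruct (IH (Z.to_nat q) qM ltac:(lia) L F hL hF hFL) as [Ln [l1 [l2 [l3 [l4 [l5 l6]]]]]]; auto.
      * intros y [s [f [hs [hf ->]]]]. rewrite zmul_addr, <- zmul_mul, Z2Nat.id by lia.
        rewrite <- hq. destruct hF as [f0 [fA fN]]. apply fA; auto. apply sub_zmul; auto. split; auto.
      * exists (fun n x => S x /\ Ln n (zmul H p x)). split; [|split; [|split; [|split; [|split]]]].
        -- intro n. destruct (l1 n) as [t0 [tA tN]]. destruct hS as [s0 [sA sN]]. split; [|split].
           ++ rewrite zmul_zero; auto.
           ++ intros x y [hx1 hx2] [hy1 hy2]. rewrite zmul_addr; auto.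
           ++ intros x [hx1 hx2]. rewrite zmul_oppr; auto.
        -- intros n x hx. split; auto. apply l2. apply sub_zmul; auto.
        -- intros n x [h _]; auto.
        -- intros n x [h1 h2]; auto.
        -- intros x hx. destruct (l5 _ (hpL x hx)) as [n hn]. exists n; auto.
        -- intro n. destruct (l6 n) as [y [[s [f [hs [hf ->]]]] hy]].
           exists s. split; auto. intros [_ h]. apply hy.
           destruct (l1 n) as [_ [tA _]]. apply tA; auto.
Qed.

Lemma caseB : (forall l M, (1 <= M)%Z -> exists x, ~ spanl H l (zmul H M x)) ->
  exists Sn, chainP H (fun _ => True) (zsub H) Sn.
Proof.
  intro hB.
  assert (hg : forall n (l : list H), exists v, ~ spanl H l (zmul H (Z.of_nat (fact n)) v)).
  { intros n l. apply hB. pose proof (lt_O_fact n). lia. }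
  set (g := fun n l => proj1_sig (constructive_indefinite_description _ (hg n l))).
  assert (gspec : forall n l, ~ spanl H l (zmul H (Z.of_nat (fact n)) (g n l))).
  { intros n l. unfold g. destruct (constructive_indefinite_description _ _); simpl; auto. }
  set (ws := nat_rect (fun _ => list H) nil (fun n l => g n l :: l)).
  set (w := fun n => g n (ws n)).
  assert (WE : forall n, Wf H w n = spanl H (ws n)).
  { induction n; simpl; auto. rewrite IHn. reflexivity. }
  apply (generic H (fun _ => True) (zsub H) w (fun n => Z.of_nat (fact n))); auto.
  - split; [|split]; auto.
  - apply zsub_sub.
  - intros x _; auto.
  - intros n [k [l [hk [hl e]]]]. unfold zsub in hk. subst k. rewrite add0 in e.
    apply (gspec n (ws n)). rewrite <- WE. fold (w n). rewrite e. auto.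
  - intros n. exists (Z.of_nat (Datatypes.S n)). change (fact (Datatypes.S n)) with (Datatypes.S n * fact n)%nat.
    apply Nat2Z.inj_mul.
  - intros K hK hFK hKS x _ hkx n a h1 h2.
    assert (a0 : a <> 0%Z).
    { intros ->. apply h2. rewrite zmul0. apply sumg_l. apply Wf_sub. destruct hK; auto. }
    set (N := Nat.max (Z.to_nat (Z.abs a)) (Datatypes.S n)).
    destruct (div_fact N (Z.to_nat (Z.abs a))) as [q hq]; [lia|].
    exists N.
    assert (e : Z.of_nat (fact N) = ((Z.of_nat q * Z.sgn a) * a)%Z).
    { rewrite hq, Nat2Z.inj_mul, Z2Nat.id by lia. rewrite <- Z.mul_assoc. f_equal.
      destruct a; simpl; lia. }
    rewrite e, zmul_mul. apply sub_zmul. apply sumg_sub; auto. apply Wf_sub.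
    revert h1. apply sumg_mono. intros u hu; auto. intros u hu. apply (Wf_mono H w (Datatypes.S n)); auto. lia.
Qed.

Theorem ab_main : (forall l : list H, exists x, ~ spanl H l x) ->
  exists Sn, chainP H (fun _ => True) (zsub H) Sn.
Proof.
  intro hnf.
  destruct (classic (exists l M, (1 <= M)%nat /\ forall x, spanl H l (zmul H (Z.of_nat M) x))) as [[l [M [hM hl]]]|hn].
  - destruct (bounded M hM (fun _ => True) (spanl H l)) as [Sn hSn]; auto.
    + split; [|split]; auto.
    + apply spanl_sub.
    + intros x _; auto.
    + intros [l' [_ hl']]. destruct (hnf (l ++ l')) as [x hx]. apply hx.
      destruct (hl' x I) as [f [s [hf [hs ->]]]]. apply spanl_app; auto.
    + exists Sn. apply (chainP_weaken _ _ (spanl H l)); auto.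
      intros x hx. unfold zsub in hx. subst. destruct (spanl_sub H l); auto.
  - apply caseB. intros l M hM. apply NNPP; intro h. apply hn. exists l, (Z.to_nat M). split; [lia|].
    intro x. rewrite Z2Nat.id by lia. apply NNPP; intro h2. apply h; eauto.
Qed.
End Main.

Section Grp.
Variable G : group.
Implicit Types x y z : G.
Local Notation "x * y" := (gmul x y).
Local Notation "x ^-1" := (ginv x) (at level 2).
Local Notation "1" := (@gone G).

Lemma gmulV_r x : x * x^-1 = 1.
Proof.
  rewrite <- (gmul1 G (x * x^-1)). rewrite <- (gmulV G (x^-1)) at 1.
  rewrite <- gmulA, (gmulA _ (x^-1)), gmulV, gmul1, gmulV. reflexivity.
Qed.
Lemma gmul1_r x : x * 1 = x.
Proof. rewrite <- (gmulV G x), gmulA, gmulV_r, gmul1; auto. Qed.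
Lemma gcancel x y z : x * y = x * z -> y = z.
Proof. intro h. rewrite <- (gmul1 G y), <- (gmul1 G z), <- (gmulV G x), <- !gmulA, h; auto. Qed.
Lemma ginv_mul x y : (x * y)^-1 = y^-1 * x^-1.
Proof.
  apply (gcancel (x * y)). rewrite gmulV_r, <- gmulA, (gmulA _ y), gmulV_r, gmul1, gmulV_r; auto.
Qed.
Lemma ginv_inv x : (x^-1)^-1 = x.
Proof. apply (gcancel (x^-1)). rewrite gmulV_r, gmulV; auto. Qed.
Lemma ginv1 : 1^-1 = 1.
Proof. rewrite <- (gmul1_r (1^-1)). apply gmulV. Qed.

Definition NN := commutator_subgroup G.
Lemma N1 : NN 1. Proof. apply gen_one. Qed.
Lemma Nmul x y : NN x -> NN y -> NN (x * y). Proof. apply gen_mul. Qed.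
Lemma Ninv x : NN x -> NN (x^-1). Proof. apply gen_inv. Qed.
Lemma Ncomm x y : NN (commutator x y). Proof. apply gen_base. eauto. Qed.
Lemma Nconj n y : NN n -> NN (y^-1 * (n * y)).
Proof.
  intro h. replace (y^-1 * (n * y)) with (n * commutator n y).
  - apply Nmul; auto. apply Ncomm.
  - unfold commutator. rewrite !gmulA, gmulV_r, gmul1. rewrite <- !gmulA. reflexivity.
Qed.

Definition cls x : G -> Prop := fun y => NN (x^-1 * y).
Definition Q := {P : G -> Prop | exists x, P = cls x}.
Definition pi x : Q := exist _ (cls x) (ex_intro _ x eq_refl).

Lemma Q_eq (a b : Q) : proj1_sig a = proj1_sig b -> a = b.
Proof. destruct a, b; simpl; intros ->. f_equal. apply proof_irrelevance. Qed.

Lemma pi_eq x y : NN (x^-1 * y) -> pi x = pi y.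
Proof.
  intro h. apply Q_eq; simpl. apply pred_ext; intros z hz; unfold cls in *.
  - replace (y^-1 * z) with ((x^-1 * y)^-1 * (x^-1 * z)).
    + apply Nmul; auto. apply Ninv; auto.
    + rewrite ginv_mul, ginv_inv, <- gmulA, (gmulA _ x), gmulV_r, gmul1; auto.
  - replace (x^-1 * z) with ((x^-1 * y) * (y^-1 * z)).
    + apply Nmul; auto.
    + rewrite <- gmulA, (gmulA _ y), gmulV_r, gmul1; auto.
Qed.
Lemma pi_eq_inv x y : pi x = pi y -> NN (x^-1 * y).
Proof.
  intro h. apply (f_equal (@proj1_sig _ _)) in h. simpl in h.
  change (cls x y). rewrite h. unfold cls. rewrite gmulV. apply N1.
Qed.

Lemma pi_surj (h : Q) : exists x, h = pi x.
Proof. destruct h as [P [x ->]]. exists x. reflexivity. Qed.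

Definition rep (h : Q) : G := proj1_sig (constructive_indefinite_description _ (pi_surj h)).
Lemma rep_pi h : pi (rep h) = h.
Proof. unfold rep. destruct (constructive_indefinite_description _ _); simpl; auto. Qed.

Lemma cong_mul x x' y y' : pi x = pi x' -> pi y = pi y' -> pi (x * y) = pi (x' * y').
Proof.
  intros h1 h2. apply pi_eq_inv in h1. apply pi_eq_inv in h2. apply pi_eq.
  replace ((x * y)^-1 * (x' * y')) with ((y^-1 * ((x^-1 * x') * y)) * (y^-1 * y')).
  - apply Nmul; auto. apply Nconj; auto.
  - rewrite ginv_mul, <- !gmulA, (gmulA _ y (y^-1)), gmulV_r, gmul1. reflexivity.
Qed.
Lemma cong_inv x x' : pi x = pi x' -> pi (x^-1) = pi (x'^-1).
Proof.
  intro h1. apply pi_eq_inv in h1. apply pi_eq. rewrite ginv_inv.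
  replace (x * x'^-1) with (((x^-1)^-1 * ((x^-1 * x') * x^-1)))^-1.
  - apply Ninv, Nconj; auto.
  - rewrite ginv_inv, <- !gmulA, (gmulA _ x), gmulV_r, gmul1.
    rewrite !ginv_mul, ginv_inv. reflexivity.
Qed.

Definition qadd (a b : Q) : Q := pi (rep a * rep b).
Definition qopp (a : Q) : Q := pi ((rep a)^-1).
Definition qzero : Q := pi 1.

Lemma qadd_pi x y : qadd (pi x) (pi y) = pi (x * y).
Proof. unfold qadd. apply cong_mul; apply rep_pi. Qed.
Lemma qopp_pi x : qopp (pi x) = pi (x^-1).
Proof. unfold qopp. apply cong_inv; apply rep_pi. Qed.

Lemma qaddA a b c : qadd a (qadd b c) = qadd (qadd a b) c.
Proof.
  destruct (pi_surj a) as [x ->], (pi_surj b) as [y ->], (pi_surj c) as [z ->].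
  rewrite !qadd_pi, gmulA; auto.
Qed.
Lemma qaddC a b : qadd a b = qadd b a.
Proof.
  destruct (pi_surj a) as [x ->], (pi_surj b) as [y ->]. rewrite !qadd_pi.
  apply pi_eq. rewrite ginv_mul. apply Ncomm.
Qed.
Lemma qadd0 a : qadd qzero a = a.
Proof. destruct (pi_surj a) as [x ->]. unfold qzero. rewrite qadd_pi, gmul1; auto. Qed.
Lemma qaddN a : qadd (qopp a) a = qzero.
Proof. destruct (pi_surj a) as [x ->]. rewrite qopp_pi, qadd_pi, gmulV; auto. Qed.

Definition Hab : abgroup := AbGroup Q qadd qopp qzero qaddA qaddC qadd0 qaddN.

Lemma gen_mono (A B : G -> Prop) g : (forall x, A x -> B x) -> gen G A g -> gen G B g.
Proof.
  intros hAB h; induction h.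
  - apply gen_base; auto.
  - apply gen_one.
  - apply gen_mul; auto.
  - apply gen_inv; auto.
Qed.

Lemma lift_span (l : list Hab) (y : Hab) : spanl Hab l y ->
  exists h, gen G (fun x => In x (map rep l)) h /\ pi h = y.
Proof.
  revert y; induction l as [|a l IH]; simpl; intros y hy.
  - unfold zsub in hy. subst. exists 1. split; [apply gen_one|reflexivity].
  - destruct hy as [k [m [[z ->] [hm ->]]]].
    destruct (IH m hm) as [hm' [g1 e1]].
    assert (hk : exists h, gen G (fun x => rep a = x \/ In x (map rep l)) h /\ pi h = zmul Hab z a).
    { induction z using Z.peano_ind.
      - exists 1. split; [apply gen_one|]. rewrite zmul0. reflexivity.
      - destruct IHz as [h [gh eh]]. exists (h * rep a). split.
        + apply gen_mul; auto. apply gen_base; auto.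
        + rewrite zmul_succ, <- eh, <- (rep_pi a) at 1. rewrite rep_pi.
          change (pi (h * rep a) = qadd (pi h) a). rewrite <- (rep_pi a) at 2. rewrite qadd_pi. auto.
      - destruct IHz as [h [gh eh]]. exists (h * (rep a)^-1). split.
        + apply gen_mul; auto. apply gen_inv. apply gen_base; auto.
        + rewrite zmul_pred, <- eh.
          change (pi (h * (rep a)^-1) = qadd (pi h) (qopp a)). rewrite <- (rep_pi a) at 2.
          rewrite qopp_pi, qadd_pi. auto. }
    destruct hk as [hk [gk ek]]. exists (hk * hm'). split.
    + apply gen_mul; auto. apply (gen_mono (fun x => In x (map rep l))); auto.
    + change (pi (hk * hm') = qadd (zmul Hab z a) m). rewrite <- ek, <- e1, qadd_pi. auto.
Qed.

Lemma least_nat (P : nat -> Prop) : (exists n, P n) -> exists n, P n /\ forall m, P m -> (n <= m)%nat.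
Proof.
  intros [n hn]. revert hn. induction n as [n IH] using lt_wf_ind. intro hn.
  destruct (classic (exists m, P m /\ (m < n)%nat)) as [[m [hm hmn]]|hno].
  - apply (IH m hmn hm).
  - exists n. split; auto. intros m hm. destruct (Nat.lt_ge_cases m n); auto. exfalso; eauto.
Qed.

Theorem main_contra : ~ abelianization_finitely_generated G -> ~ SB_generated G.
Proof.
  intros hnfg [A [hSB hgen]].
  assert (hnf : forall l : list Hab, exists u : Hab, ~ spanl Hab l u).
  { intro l. apply NNPP; intro hn. apply hnfg. exists (map rep l). intro g.
    assert (hs : spanl Hab l (pi g)).
    { apply NNPP; intro h; apply hn; eauto. }
    destruct (lift_span l (pi g) hs) as [h [gh eh]]. exists h. split; auto. apply pi_eq_inv; auto. }
  destruct (ab_main Hab hnf) as [Sn [s1 [_ [_ [s4 [s5 s6]]]]]].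
  assert (mono : forall m n (x : Hab), (m <= n)%nat -> Sn m x -> Sn n x).
  { intros m n x hmn; induction hmn; auto. }
  assert (hl : forall g, exists n, Sn n (pi g) /\ forall m, Sn m (pi g) -> (n <= m)%nat).
  { intro g. apply least_nat. apply s5. exact I. }
  set (ell := fun g => proj1_sig (constructive_indefinite_description _ (hl g))).
  assert (ell1 : forall g, Sn (ell g) (pi g)).
  { intro g. unfold ell. destruct (constructive_indefinite_description _ _) as [n hn]; apply hn. }
  assert (ell2 : forall g m, Sn m (pi g) -> (ell g <= m)%nat).
  { intro g. unfold ell. destruct (constructive_indefinite_description _ _) as [n hn]; apply hn. }
  assert (Sinv : forall n g, Sn n (pi g) -> Sn n (pi (g^-1))).
  { intros n g h. rewrite <- qopp_pi. destruct (s1 n) as [_ [_ sN]]. apply (sN (pi g)); auto. }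
  assert (ellinv : forall g, ell (g^-1) = ell g).
  { intro g. apply Nat.le_antisymm.
    - apply ell2. apply Sinv. apply ell1.
    - apply ell2. rewrite <- (ginv_inv g). apply Sinv. rewrite ginv_inv. apply ell1. }
  set (d := fun x y => if excluded_middle_informative (x = y) then 0%R else INR (Datatypes.S (ell (x^-1 * y)))).
  assert (hd : left_invariant_metric G d).
  { unfold d. split; [|split; [|split; [|split]]].
    - intros x y. destruct (excluded_middle_informative _); [lra|apply pos_INR].
    - intros x y. destruct (excluded_middle_informative _) as [e|ne]; split; auto; try lra.
      + intro h. exfalso. rewrite S_INR in h. pose proof (pos_INR (ell (x^-1 * y))). lra.
      + intro; contradiction.
    - intros x y. destruct (excluded_middle_informative (x = y)) as [e|ne];
        destruct (excluded_middle_informative (y = x)) as [e'|ne']; try congruence.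
      rewrite <- ellinv, ginv_mul, ginv_inv. reflexivity.
    - intros x y z.
      destruct (excluded_middle_informative (x = z)) as [e1|n1].
      { destruct (excluded_middle_informative (x = y)), (excluded_middle_informative (y = z));
        try lra; apply Rplus_le_le_0_compat; try lra; apply pos_INR. }
      destruct (excluded_middle_informative (x = y)) as [e2|n2].
      { subst. destruct (excluded_middle_informative (y = z)); [congruence|lra]. }
      destruct (excluded_middle_informative (y = z)) as [e3|n3].
      { subst. lra. }
      assert (le : (ell (gmul (x^-1) z) <= Nat.max (ell (gmul (x^-1) y)) (ell (gmul (y^-1) z)))%nat).
      { apply ell2. replace (x^-1 * z) with ((x^-1 * y) * (y^-1 * z)).
        - rewrite <- qadd_pi. destruct (s1 (Nat.max (ell (gmul (x^-1) y)) (ell (gmul (y^-1) z)))) as [_ [sA _]].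
          apply sA; (eapply mono; [|apply ell1]); lia.
        - rewrite <- gmulA, (gmulA _ y), gmulV_r, gmul1. auto. }
      apply le_INR in le. rewrite !S_INR.
      pose proof (pos_INR (ell (x^-1 * y))). pose proof (pos_INR (ell (y^-1 * z))).
      destruct (Nat.max_spec (ell (x^-1 * y)) (ell (y^-1 * z))) as [[_ hm]|[_ hm]]; rewrite hm in le; lra.
    - intros g x y. rewrite ginv_mul, <- gmulA, (gmulA _ (g^-1)), gmulV, gmul1.
      destruct (excluded_middle_informative (g * x = g * y)) as [e|ne];
        destruct (excluded_middle_informative (x = y)) as [e'|ne']; auto.
      + exfalso. apply ne'. apply (gcancel g); auto.
      + exfalso. apply ne. congruence. }
  destruct (hSB d hd) as [M hM].
  destruct (INR_archimed 1 M) as [N0 hN0]; [lra|]. rewrite Rmult_1_r in hN0.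
  assert (key : exists N, forall g, gen G A g -> Sn N (pi g)).
  { destruct (classic (exists a0, A a0)) as [[a0 ha0]|hno].
    - exists (Nat.max N0 (ell a0)). intros g hg. induction hg as [a ha| |x y _ IHx _ IHy|x _ IHx].
      + destruct (classic (a0 = a)) as [<-|ne].
        * eapply mono; [|apply ell1]. lia.
        * specialize (hM a0 a ha0 ha). unfold d in hM.
          destruct (excluded_middle_informative (a0 = a)) as [e|_]; [congruence|].
          assert (lt : (Datatypes.S (ell (gmul (a0^-1) a)) <= N0)%nat).
          { apply INR_le. lra. }
          replace (pi a) with (qadd (pi a0) (pi (a0^-1 * a))).
          -- destruct (s1 (Nat.max N0 (ell a0))) as [_ [sA _]]. apply sA.
             ++ eapply mono; [|apply ell1]. lia.
             ++ eapply mono; [|apply ell1]. lia.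
          -- rewrite qadd_pi, gmulA, gmulV_r, gmul1. auto.
      + destruct (s1 (Nat.max N0 (ell a0))) as [s0 _]. exact s0.
      + rewrite <- qadd_pi. destruct (s1 (Nat.max N0 (ell a0))) as [_ [sA _]]. apply sA; auto.
      + apply Sinv; auto.
    - exists 0%nat. intros g hg. induction hg as [a ha| |x y _ IHx _ IHy|x _ IHx].
      + exfalso; eauto.
      + destruct (s1 0%nat) as [s0 _]. exact s0.
      + rewrite <- qadd_pi. destruct (s1 0%nat) as [_ [sA _]]. apply sA; auto.
      + apply Sinv; auto. }
  destruct key as [N hN]. destruct (s6 N) as [y [_ hy]]. apply hy.
  rewrite <- (rep_pi y). apply hN. apply hgen.
Qed.
End Grp.

Theorem corollary2p8 (G : group) :
  SB_generated G -> abelianization_finitely_generated G.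
Proof.
  intro h. apply NNPP. intro hn. exact (main_contra G hn h).
Qed.
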